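(* The set $\mathcal{D}=\{G\in\mathcal{T}: (\mathbb{N},G) \text{ is divisible}\}$ is a dense $G_\delta$ subset of $\mathcal{T}$.
   Context: Let $\mathbb{N}^{\mathbb{N}\times\mathbb{N}}$ be the space of functions $\mathbb{N}\times\mathbb{N}\to\mathbb{N}$ with the product of discrete topologies. Let $\mathcal{A}=\{G\in\mathbb{N}^{\mathbb{N}\times\mathbb{N}}: G \text{ is an abelian group operation on } \mathbb{N} \text{ with identity element } 0\}$ and $\mathcal{T}=\{G\in\mathcal{A}: (\mathbb{N},G)\text{ is torsion-free}\}$, with the subspace topology. *)

(* Defs.v *)
From HB Require Import structures.
From mathcomp Require Import all_boot all_order all_algebra.
From mathcomp Require Import all_classical all_reals topology function_spaces
  subtype_topology borel_hierarchy.
Set Implicit Arguments.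
Unset Strict Implicit.
Unset Printing Implicit Defensive.
Local Open Scope classical_set_scope.

(* The space N^(N x N) with the product of discrete topologies
   (nat carries the discrete topology in MathComp-Analysis). *)
Definition Space := {ptws (nat * nat)%type -> nat}.

Definition gmul (G : nat * nat -> nat) (n x : nat) : nat :=
  iter n (fun y => G (x, y)) 0%N.

Definition is_abgroup0 (G : nat * nat -> nat) : Prop :=
  [/\ (forall x y z, G (G (x, y), z) = G (x, G (y, z))),
      (forall x y, G (x, y) = G (y, x)),
      (forall x, G (0%N, x) = x) &
      (forall x, exists y, G (x, y) = 0%N)].

Definition torsion_free (G : nat * nat -> nat) : Prop :=
  forall (n x : nat), (0 < n)%N -> gmul G n x = 0%N -> x = 0%N.

Definition divisible (G : nat * nat -> nat) : Prop :=
  forall (n x : nat), (0 < n)%N -> exists y, gmul G n y = x.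

Definition Aset : set Space := [set G | is_abgroup0 G].
Definition Tset : set Space := [set G | is_abgroup0 G /\ torsion_free G].

(* D as a subset of the subspace T (subspace topology = initial topology of
   the inclusion, provided by subtype_topology on set_type). *)
Definition Dset : set (set_type Tset) :=
  [set G | divisible (set_val G)].

(* Main.v *)
Require Import Defs.
From mathcomp Require Import all_boot all_classical topology function_spaces
  subtype_topology borel_hierarchy.
From mathcomp Require Import zify.
Set Implicit Arguments. Unset Strict Implicit.
Local Open Scope classical_set_scope.
Section Grp.
Variable G : nat * nat -> nat.
Hypothesis HG : is_abgroup0 G.
Hypothesis TF : torsion_free G.

Definition op a b := G (a, b).
Arguments op : simpl never.
Lemma opA a b c : op (op a b) c = op a (op b c).
Proof. by case: HG => h _ _ _; apply: h. Qed.
Lemma opC a b : op a b = op b a.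
Proof. by case: HG => _ h _ _; apply: h. Qed.
Lemma op0 a : op 0 a = a.
Proof. by case: HG => _ _ h _; apply: h. Qed.
Lemma opx0 a : op a 0 = a.
Proof. by rewrite opC op0. Qed.
Definition neg a := xget 0%N [set y | op a y = 0%N].
Lemma opN a : op a (neg a) = 0%N.
Proof. case: HG => _ _ _ h; have [y hy] := h a. exact: (xgetI 0%N (P := [set y | op a y = 0%N]) hy). Qed.
Lemma opCA a b c : op a (op b c) = op b (op a c).
Proof. by rewrite -opA (opC a b) opA. Qed.
Lemma op_cancel a b c : op a c = op b c -> a = b.
Proof. by move=> h; rewrite -(opx0 a) -(opx0 b) -(opN c) -!opA h. Qed.

Definition mul n x := gmul G n x.
Arguments mul : simpl never.
Lemma mul0 x : mul 0 x = 0%N. Proof. by []. Qed.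
Lemma mulS n x : mul n.+1 x = op x (mul n x). Proof. by []. Qed.
Lemma mul1 x : mul 1 x = x. Proof. by rewrite mulS mul0 opx0. Qed.
Lemma mulD m n x : mul (m + n) x = op (mul m x) (mul n x).
Proof. elim: m => [|m IH]; first by rewrite add0n mul0 op0.
by rewrite addSn !mulS IH opA. Qed.
Lemma mul_op n a b : mul n (op a b) = op (mul n a) (mul n b).
Proof. elim: n => [|n IH]; first by rewrite !mul0 op0.
rewrite !mulS IH !opA; congr op; rewrite -!opA; congr op; exact: opC. Qed.
Lemma mulM m n x : mul (m * n) x = mul m (mul n x).
Proof. elim: m => [|m IH]; first by rewrite mul0n !mul0.
by rewrite mulSn mulD IH mulS. Qed.
Lemma mulx0 n : mul n 0 = 0%N.
Proof. by elim: n => // n IH; rewrite mulS IH op0. Qed.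
Lemma mulC m n x : mul m (mul n x) = mul n (mul m x).
Proof. by rewrite -!mulM mulnC. Qed.
Lemma mul_inj n a b : (0 < n)%N -> mul n a = mul n b -> a = b.
Proof.
move=> n0 h; apply: (@op_cancel _ _ (neg b)); rewrite opN.
apply: (TF n0); rewrite -/(mul n _) mul_op h -mul_op opN mulx0 //.
Qed.

Definition den (p : nat * nat) := p.2.+1.
Arguments den : simpl never.
Definition E (p q : nat * nat) : Prop := mul (den q) p.1 = mul (den p) q.1.
Lemma E_refl p : E p p. Proof. by []. Qed.
Lemma E_sym p q : E p q -> E q p. Proof. by rewrite /E => ->. Qed.
Lemma E_trans p q r : E p q -> E q r -> E p r.
Proof.
rewrite /E => h1 h2; apply: (@mul_inj (den q)) => //.
by rewrite mulC h1 mulC h2 mulC.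
Qed.

Definition add (p q : nat * nat) : nat * nat :=
  (op (mul (den q) p.1) (mul (den p) q.1), (den p * den q).-1).
Lemma den_add p q : den (add p q) = (den p * den q)%N.
Proof. by change (den (add p q)) with ((den p * den q).-1.+1); rewrite prednK // muln_gt0. Qed.
Lemma addC p q : add p q = add q p.
Proof. by rewrite /add opC mulnC. Qed.
Lemma add_fst p q : (add p q).1 = op (mul (den q) p.1) (mul (den p) q.1).
Proof. by []. Qed.
Lemma pairE a b : a.1 = b.1 -> den a = den b -> a = b.
Proof. by case: a => a1 a2; case: b => b1 b2 /= -> [->]. Qed.
Lemma addA p q r : add (add p q) r = add p (add q r).
Proof.
apply: pairE; last by rewrite !den_add mulnA.
rewrite !add_fst !den_add (mul_op (den r) (mul (den q) p.1)) (mul_op (den p) (mul (den r) q.1)) -!mulM -[in RHS]opA.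
congr (op (op (mul _ _) (mul _ _)) (mul _ _)); lia.
Qed.
Definition z : nat * nat := (0%N, 0%N).
Lemma add0 p : add z p = p.
Proof.
apply: pairE; first by rewrite add_fst /z /= mulx0 op0 mul1.
by rewrite den_add [den z]/den mul1n.
Qed.
Definition negp (p : nat * nat) := (neg p.1, p.2).
Lemma addN p : E (add p (negp p)) z.
Proof. by rewrite /E /add /= -mul_op opN !mulx0. Qed.
Lemma addEl p p' q : E p p' -> E (add p q) (add p' q).
Proof.
rewrite /E !den_add !add_fst => h.
rewrite (mul_op (den p' * den q)) (mul_op (den p * den q)) -!mulM; congr op.
  rewrite (_ : (den p' * den q * den q = (den q * den q) * den p')%N); last lia.
  by rewrite mulM h -mulM; congr mul; lia.
by congr mul; lia.
Qed.
Lemma addE p p' q q' : E p p' -> E q q' -> E (add p q) (add p' q').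
Proof.
move=> h1 h2; apply: E_trans (addEl q h1) _.
by rewrite addC (addC p'); apply: addEl.
Qed.

Definition hmul n p := iter n (add p) z.
Lemma hmulE n p : E (hmul n p) (mul n p.1, p.2).
Proof.
elim: n => [|n IH]; first by rewrite /E mul0 !mulx0.
rewrite /hmul iterS -/(hmul n p).
apply: E_trans (addE (E_refl p) IH) _.
rewrite /E den_add add_fst (_ : den (mul n p.1, p.2) = den p) //.
rewrite (_ : den (mul n.+1 p.1, p.2) = den p) // -mul_op -mulS.
by rewrite mulM.
Qed.
Lemma mulE n p q : E p q -> E (mul n p.1, p.2) (mul n q.1, q.2).
Proof. by rewrite /E /= => h; rewrite mulC h mulC. Qed.

Definition can p := xget z (E p).
Lemma canE p : E p (can p).
Proof. exact: (xgetI z (E_refl p)). Qed.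
Lemma can_eq p q : E p q -> can p = can q.
Proof.
move=> h; rewrite /can; congr xget; apply/funext => r; apply/propext; split.
  by move=> h'; apply: E_trans (E_sym h) h'.
by move=> h'; apply: E_trans h h'.
Qed.
Lemma can_E p q : can p = can q -> E p q.
Proof. by move=> h; apply: E_trans (canE p) _; rewrite h; apply: E_sym; apply: canE. Qed.
Lemma can_can p : can (can p) = can p.
Proof. by apply: can_eq; apply: E_sym; apply: canE. Qed.


Lemma can_add p q : can (add (can p) (can q)) = can (add p q).
Proof. by apply: can_eq; apply: addE; apply: E_sym; apply: canE. Qed.

Definition Dc : set (nat * nat) := [set p | can p = p].
Definition embC g := can (g, 0%N).
Lemma iota_inj : injective embC.
Proof. by move=> a b /can_E; rewrite /E !mul1. Qed.
Lemma Dc_can p : Dc (can p). Proof. exact: can_can. Qed.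

Variable N : nat.
Hypothesis N0 : (0 < N)%N.

Definition Dc' := Dc `\` (embC @` [set k | (k < N)%N]).

Lemma Dc_infinite : infinite_set Dc.
Proof.
apply/infiniteP; apply: (@card_le_trans _ _ _ (embC @` setT)).
  have : (embC @` setT #= @setT nat)%card by apply: inj_card_eq => x y _ _; apply: iota_inj.
  by rewrite card_eq_le => /andP[].
by apply: subset_card_le => _ [x _ <-]; apply: Dc_can.
Qed.

Lemma Dc'_card : ([set: nat] #= Dc')%card.
Proof.
rewrite card_eq_sym; apply: eq_card_nat; first exact: countableP.
apply: infinite_setD; first exact: Dc_infinite.
apply: finite_image; exact: finite_II.
Qed.

Lemma Dc'_bij : exists f : nat -> nat * nat, set_bij setT Dc' f.
Proof. exact/card_set_bijP/Dc'_card. Qed.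
Definition fb := proj1_sig (cid Dc'_bij).
Lemma fbP : set_bij setT Dc' fb.
Proof. exact: (proj2_sig (cid Dc'_bij)). Qed.

Definition phi k := if (k < N)%N then embC k else fb (k - N).
Lemma phi_Dc k : Dc (phi k).
Proof.
rewrite /phi; case: ifP => _; first exact: Dc_can.
by case: fbP => h _ _; have [] := h (k - N)%N I.
Qed.
Lemma phi_inj : injective phi.
Proof.
have [hf hi hs] := fbP.
have notiota : forall k l, (l < N)%N -> fb k <> embC l.
  by move=> k l lN e; have [_] := hf k I; apply; exists l.
move=> a b; rewrite /phi; case: ifPn => aN; case: ifPn => bN.
- exact: iota_inj.
- by move=> e; exfalso; apply: (notiota (b - N)%N a aN); rewrite e.
- by move=> e; exfalso; apply: (notiota (a - N)%N b bN e).
- move=> /hi; rewrite !inE => /(_ I I) e; move: aN bN e; rewrite -!leqNgt; lia.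
Qed.
Lemma phi_surj p : Dc p -> exists k, phi k = p.
Proof.
move=> Dp; have [hf hi hs] := fbP.
have [[l lN <-]|nI] := pselect ((embC @` [set k | (k < N)%N]) p).
  by exists l; rewrite /phi lN.
have [k _ <-] := hs p (conj Dp nI).
by exists (k + N)%N; rewrite /phi ltnNge leq_addl /= addnK.
Qed.
Lemma phi0 : phi 0 = can z.
Proof. by rewrite /phi N0. Qed.

Definition phinv p := xget 0%N [set k | phi k = p].
Lemma phinvK k : phinv (phi k) = k.
Proof. by apply: phi_inj; apply: (xgetI 0%N (P := [set l | phi l = phi k]) (erefl (phi k))). Qed.
Lemma phiK p : Dc p -> phi (phinv p) = p.
Proof. by move=> /phi_surj [k hk]; apply: (xgetI 0%N (P := [set l | phi l = p]) hk). Qed.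

Lemma can_addr p q : can (add p (can q)) = can (add p q).
Proof. by apply: can_eq; apply: addE; [apply: E_refl|apply: E_sym; apply: canE]. Qed.
Lemma can_addl p q : can (add (can p) q) = can (add p q).
Proof. by rewrite addC can_addr addC. Qed.
Lemma phi_can x : can (phi x) = phi x.
Proof. exact: phi_Dc. Qed.

Definition H (ab : nat * nat) := phinv (can (add (phi ab.1) (phi ab.2))).
Lemma phiH a b : phi (H (a, b)) = can (add (phi a) (phi b)).
Proof. by apply: phiK; apply: Dc_can. Qed.

Lemma phi_gmul n x : phi (gmul H n x) = can (hmul n (phi x)).
Proof.
elim: n => [|n IH]; first by rewrite phi0.
rewrite (_ : gmul H n.+1 x = H (x, gmul H n x)) // phiH IH can_addr.
by rewrite /hmul iterS.
Qed.

Lemma H_abgroup : is_abgroup0 H.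
Proof.
split.
- move=> a b c; apply: phi_inj.
  by rewrite !phiH can_addl (can_addr (phi a)) addA.
- by move=> a b; rewrite /H /= addC.
- by move=> a; apply: phi_inj; rewrite phiH phi0 can_addl add0 phi_can.
- move=> a; exists (phinv (can (negp (phi a)))); apply: phi_inj.
  rewrite phiH phiK; last exact: Dc_can.
  rewrite (can_addr (phi a)) phi0; apply: can_eq; exact: addN.
Qed.

Lemma H_tf : torsion_free H.
Proof.
move=> n x n0 h.
have e : phi (gmul H n x) = phi 0 by rewrite h.
move: e; rewrite phi_gmul phi0 => /can_E /(E_trans (E_sym (hmulE n (phi x)))).
rewrite /E mulx0 mul1 => /(TF n0) p0.
apply: phi_inj; rewrite -phi_can phi0; apply: can_eq.
by rewrite /E /= p0 !mulx0.
Qed.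

Lemma H_div : divisible H.
Proof.
move=> n x n0.
pose p := phi x; pose q := (p.1, (n * den p).-1).
exists (phinv (can q)); apply: phi_inj.
rewrite phi_gmul phiK; last exact: Dc_can.
rewrite -[RHS]phi_can -/p.
apply: can_eq.
apply: E_trans (hmulE n (can q)) _.
apply: E_trans (mulE n (E_sym (canE q))) _.
rewrite /E /q /=.
rewrite (_ : den (mul n p.1, (n * den p).-1) = (n * den p)%N); last first.
  by rewrite /den /= prednK // muln_gt0 n0.
by rewrite mulC -mulM.
Qed.

Lemma H_agree a b : (a < N)%N -> (b < N)%N -> (G (a, b) < N)%N -> H (a, b) = G (a, b).
Proof.
move=> aN bN cN; apply: phi_inj.
rewrite phiH {1}/phi aN {1}/phi bN /embC can_addl can_addr /phi cN /embC.
by apply: can_eq; rewrite /E /add /= !mul1.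
Qed.

End Grp.

Lemma core (G : nat * nat -> nat) N : is_abgroup0 G -> torsion_free G -> (0 < N)%N ->
  exists H, [/\ is_abgroup0 H, torsion_free H, divisible H &
    forall a b, (a < N)%N -> (b < N)%N -> (G (a, b) < N)%N -> H (a, b) = G (a, b)].
Proof.
move=> hg tf n0; exists (@H G hg tf N); split.
- exact: H_abgroup.
- exact: H_tf.
- exact: H_div.
- exact: H_agree.
Qed.

Definition agree (G : nat * nat -> nat) (L : seq (nat * nat)) : set Space :=
  [set H | forall p, p \in L -> H p = G p].
Lemma nbhs_pt (G : Space) p : nbhs G [set H : Space | H p = G p].
Proof.
have := @proj_continuous _ (fun _ : nat * nat => nat) p G.
move=> /(_ [set G p]); apply.
by rewrite nbhs_principalE; apply/principal_filterP.
Qed.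
Lemma nbhs_agree (G : Space) L : nbhs G (agree G L).
Proof.
elim: L => [|p L IH].
  by apply: filterS filterT => H _ p; rewrite in_nil.
apply: filterS (filterI (nbhs_pt G p) IH) => H [h1 h2] q.
by rewrite in_cons => /orP[/eqP->//|/h2].
Qed.
Lemma agree_nbhs (G : Space) A : nbhs G A -> exists L, agree G L `<=` A.
Proof.
pose F := filter_from setT (agree G).
have FF : Filter F.
  apply: filter_from_filter; first by exists [::].
  move=> i j _ _; exists (i ++ j) => // H h; split => p hp; apply: h; rewrite mem_cat hp ?orbT //.
suff : F --> (G : Space) by move=> /(_ A) h /h [L _ hL]; exists L.
apply/(@cvg_sup _ _ (fun i => Topological.class (initial_topology (fun f : Space => f i)))) => i.
move=> B; rewrite nbhsE => -[C [[D oD <-] DG] CB].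
exists [:: i] => // H hH; apply: CB; rewrite /= (hH i) ?mem_head //.
Qed.

Lemma open_sub (O : set (set_type Tset)) : open O -> exists C : set Space, open C /\ O = set_val @^-1` C.
Proof. move=> [C oC <-]. by exists C. Qed.

Definition gl (G : nat * nat -> nat) n y := [seq (y, gmul G k y) | k <- iota 0 n].
Lemma agree_gmul (G H : Space) n y : agree G (gl G n y) H -> forall k, (k <= n)%N -> gmul H k y = gmul G k y.
Proof.
move=> hA; elim=> [//|k IH] kn.
rewrite (_ : gmul H k.+1 y = H (y, gmul H k y)) // IH ?(ltnW kn) //.
rewrite hA //; apply/mapP; exists k => //; rewrite mem_iota add0n kn //.
Qed.

Definition Cset n x : set Space := [set G | exists y, gmul G n.+1 y = x].
Lemma Cset_open n x : open (Cset n x).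
Proof.
rewrite openE => G [y hy]; rewrite /interior.
apply: filterS (nbhs_agree G (gl G n.+1 y)) => H hH; exists y.
by rewrite (agree_gmul hH (leqnn _)).
Qed.

Definition Fi (i : nat) : set (set_type Tset) :=
  match @unpickle (nat * nat)%type i with
  | Some (n, x) => set_val @^-1` (Cset n x)
  | None => setT end.

Lemma Fi_open i : open (Fi i).
Proof.
rewrite /Fi; case: (unpickle i) => [[n x]|]; last exact: openT.
by exists (Cset n x) => //; apply: Cset_open.
Qed.

Lemma Dset_Gdelta : Gdelta Dset.
Proof.
exists Fi; first exact: Fi_open.
apply/seteqP; split.
  move=> g Dg i _; rewrite /Fi; case: (unpickle i) => [[n x]|] //.
  exact: Dg.
move=> g h n x n0; have := h (pickle (n.-1, x)) I.
by rewrite /Fi pickleK /= /Cset prednK.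
Qed.

Lemma sum_bound (f : nat * nat -> nat) (L : seq (nat * nat)) p :
  p \in L -> (f p <= sumn [seq f q | q <- L])%N.
Proof.
elim: L => //= q L IH; rewrite in_cons => /orP[/eqP->|/IH h]; first exact: leq_addr.
exact: leq_trans h (leq_addl _ _).
Qed.

Lemma Dset_dense : dense Dset.
Proof.
move=> O [g Og] oO.
have [C [oC eO]] := open_sub oO.
have gC : C (set_val g) by move: Og; rewrite eO.
have [L hL] := agree_nbhs (open_nbhs_nbhs (conj oC gC)).
have gT : Tset (set_val g) by apply: set_valP.
case: gT => hab htf.
pose N := (sumn [seq (q.1 + q.2 + set_val g q)%N | q <- L]).+1.
have [H [Hab Htf Hdiv Hag]] := core (N:=N) hab htf (ltn0Sn _).
have HT : H \in Tset by apply: mem_set.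
exists (@exist _ (fun z => z \in Tset) H HT); split; last exact: Hdiv.
rewrite eO /=; apply: hL => -[a b] hp.
have := sum_bound (fun q => (q.1 + q.2 + set_val g q)%N) hp => /= hb.
apply: Hag; rewrite /N ltnS; apply: leq_trans hb.
- by rewrite -addnA leq_addr.
- by rewrite addnAC leq_addl.
- exact: leq_addl.
Qed.

Theorem lemma4p3 : dense Dset /\ Gdelta Dset.
Proof. split; [exact: Dset_dense | exact: Dset_Gdelta]. Qed.
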